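(* Let $-1\le\alpha\le1$ and $t\ge0$. For all $(x,y)\in\mathbb{R}^2$ with $(x,y)\notin\{0\}\times2\pi\mathbb{Z}$, the function $t\mapsto W_{\alpha,t}(x,y)-\frac t2$ is non-increasing on $[0,\infty)$, equals $W_\alpha(x,y)$ at $t=0$, and consequently $$W_\alpha(x,y)\ \ge\ W_{\alpha,t}(x,y)-\frac t2\qquad\text{for all }t\ge0.$$
   Context: For $-1\le\alpha\le1$ and $(x,y)\in\mathbb{R}^2$ with $\cosh x-\cos y>0$, define $$W_\alpha(x,y)=\frac12\left[\frac{\alpha\,x\sinh x}{\cosh x-\cos y}-\log\big(2(\cosh x-\cos y)\big)+(1-\alpha)|x|\right],$$ and for $t\ge0$ and $(x,y)$ with $\cosh(|x|+t)-\cos y>0$, $$W_{\alpha,t}(x,y)=\frac{\alpha|x|\sinh(|x|+t)}{2(\cosh(|x|+t)-\cos y)}-\frac12\log\big(2(\cosh(|x|+t)-\cos y)\big)+\frac t2+\frac{1-\alpha}2|x|.$$ *)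

(* Defs.v *)
From Stdlib Require Import Reals.
Open Scope R_scope.

Definition W (alpha x y : R) : R :=
  / 2 * (alpha * x * sinh x / (cosh x - cos y)
         - ln (2 * (cosh x - cos y)) + (1 - alpha) * Rabs x).

Definition Wt (alpha t x y : R) : R :=
  alpha * Rabs x * sinh (Rabs x + t) / (2 * (cosh (Rabs x + t) - cos y))
  - / 2 * ln (2 * (cosh (Rabs x + t) - cos y))
  + t / 2 + (1 - alpha) / 2 * Rabs x.

Definition exceptional (x y : R) : Prop :=
  x = 0 /\ exists k : Z, y = 2 * PI * IZR k.

(* Main.v *)
Require Import Defs.
From Stdlib Require Import Reals Lra Psatz.
Open Scope R_scope.

Lemma ch_sh u : cosh u * cosh u - sinh u * sinh u = 1.
Proof.
  unfold cosh, sinh. rewrite exp_Ropp. pose proof (exp_pos u).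
  field. lra.
Qed.

Lemma cosh_ge1 u : 1 <= cosh u.
Proof.
  unfold cosh. rewrite exp_Ropp. pose proof (exp_pos u) as H.
  set (E := exp u) in *.
  assert (E + /E - 2 = (E-1)*(E-1)/E) by (field; lra).
  assert (0 <= (E-1)*(E-1)/E). { apply Rmult_le_pos. pose proof (Rle_0_sqr (E-1)) as Q; unfold Rsqr in Q; lra. left; apply Rinv_0_lt_compat; lra. }
  lra.
Qed.

Lemma cosh_gt1 u : 0 < u -> 1 < cosh u.
Proof.
  intro Hu. unfold cosh. rewrite exp_Ropp. pose proof (exp_pos u) as H.
  pose proof (exp_increasing 0 u Hu) as H1. rewrite exp_0 in H1.
  set (E := exp u) in *.
  assert (E + /E - 2 = (E-1)*(E-1)/E) by (field; lra).
  assert (0 < (E-1)*(E-1)/E). { apply Rmult_lt_0_compat. assert (0 < E-1) by lra; apply Rmult_lt_0_compat; lra. apply Rinv_0_lt_compat; lra. }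
  lra.
Qed.

Lemma sinh_ge u : 0 <= u -> u <= sinh u.
Proof.
  intro Hu. destruct (Req_dec u 0) as [->|Hn]. rewrite sinh_0; lra.
  destruct (MVT_cor2 (fun v => sinh v - v) (fun v => cosh v - 1) 0 u) as [c [Hc _]].
  lra. intros c _. apply derivable_pt_lim_minus. apply derivable_pt_lim_sinh. apply derivable_pt_lim_id.
  rewrite sinh_0 in Hc. pose proof (cosh_ge1 c). nra.
Qed.

Lemma cos1 y : cos y = 1 -> exists k : Z, y = 2 * PI * IZR k.
Proof.
  intro H. replace y with (2 * (y/2)) in H by field.
  rewrite cos_2a_sin in H. assert (sin (y/2) = 0) by nra.
  destruct (sin_eq_0_0 _ H0) as [k Hk]. exists k. lra.
Qed.
From Stdlib Require Import Reals Lra Psatz.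
Open Scope R_scope.

Lemma der_g a s c u : 0 < cosh u - c ->
  derivable_pt_lim (fun v => a*s*sinh v/(2*(cosh v - c)) - /2*ln(2*(cosh v - c))) u
    (/2*(a*s*(1 - c*cosh u) - sinh u*(cosh u - c))/(cosh u - c)^2).
Proof.
  intro Hp.
  assert (Hd : derivable_pt_lim (fun v => 2*(cosh v - c)) u (2*(sinh u - 0))).
  { apply (derivable_pt_lim_scal (fun v => cosh v - c)).
    apply (derivable_pt_lim_minus cosh (fct_cte c)).
    apply derivable_pt_lim_cosh. apply derivable_pt_lim_const. }
  assert (H1 : derivable_pt_lim (fun v => a*s*sinh v/(2*(cosh v - c))) u
     (((a*s)*cosh u * (2*(cosh u - c)) - 2*(sinh u - 0) * (a*s*sinh u))/ (2*(cosh u-c))²)).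
  { apply (derivable_pt_lim_div (fun v => a*s*sinh v) (fun v => 2*(cosh v - c))).
    apply (derivable_pt_lim_scal sinh). apply derivable_pt_lim_sinh.
    exact Hd. lra. }
  assert (H2 : derivable_pt_lim (fun v => /2*ln(2*(cosh v - c))) u
     (/2 * (/(2*(cosh u - c)) * (2*(sinh u - 0))))).
  { apply (derivable_pt_lim_scal (fun v => ln(2*(cosh v - c)))).
    apply (derivable_pt_lim_comp (fun v => 2*(cosh v - c)) ln). exact Hd.
    apply derivable_pt_lim_ln. lra. }
  pose proof (derivable_pt_lim_minus _ _ _ _ _ H1 H2) as H.
  match type of H with derivable_pt_lim _ _ ?L =>
    replace (/2*(a*s*(1 - c*cosh u) - sinh u*(cosh u - c))/(cosh u - c)^2) with L end.
  exact H.
  pose proof (ch_sh u) as E.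
  replace (2 * (sinh u - 0) * (a * s * sinh u)) with (2*a*s*(cosh u*cosh u - 1)) by (replace (cosh u*cosh u - 1) with (sinh u*sinh u) by lra; ring).
  unfold Rsqr. field. lra.
Qed.

Lemma dg_nonpos a s c u : -1 <= a <= 1 -> -1 <= c <= 1 -> 0 <= s <= u ->
  0 < cosh u - c ->
  /2*(a*s*(1 - c*cosh u) - sinh u*(cosh u - c))/(cosh u - c)^2 <= 0.
Proof.
  intros Ha Hc Hs Hp.
  pose proof (ch_sh u) as E. pose proof (cosh_ge1 u) as C1. pose proof (sinh_ge u ltac:(lra)) as S1.
  set (C := cosh u) in *. set (S := sinh u) in *.
  assert (Q : (1 - c*C)*(1-c*C) <= (C-c)*(C-c)).
  { assert ((C-c)*(C-c) - (1 - c*C)*(1-c*C) = (C*C-1)*(1-c*c)) by ring.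
    assert (0 <= (C*C-1)*(1-c*c)). { apply Rmult_le_pos; nra. } lra. }
  assert (Q2 : 1 - c*C <= C - c /\ -(C-c) <= 1 - c*C) by (split; nra).
  assert (Q3 : a*(1-c*C) <= C - c) by nra.
  assert (Q4 : a*s*(1-c*C) <= S*(C-c)) by nra.
  assert (0 < /(C-c)^2) by (apply Rinv_0_lt_compat; apply pow_lt; lra).
  unfold Rdiv. nra.
Qed.

Lemma cosh_opp u : cosh (-u) = cosh u.
Proof. unfold cosh. rewrite Ropp_involutive, Rplus_comm. reflexivity. Qed.
Lemma sinh_opp u : sinh (-u) = - sinh u.
Proof. unfold sinh. rewrite Ropp_involutive. field. Qed.

Theorem mainTheorem6 (alpha : R) (halpha : -1 <= alpha <= 1) (x y : R)
    (hxy : ~ exceptional x y) :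
  (forall t1 t2 : R, 0 <= t1 -> t1 <= t2 ->
      Wt alpha t2 x y - t2 / 2 <= Wt alpha t1 x y - t1 / 2)
  /\ Wt alpha 0 x y - 0 / 2 = W alpha x y
  /\ (forall t : R, 0 <= t -> W alpha x y >= Wt alpha t x y - t / 2).
Proof.
  set (s := Rabs x). set (c := cos y).
  assert (Hs : 0 <= s) by apply Rabs_pos.
  assert (Hc : -1 <= c <= 1) by apply COS_bound.
  assert (pos : forall u, s <= u -> 0 < cosh u - c).
  { intros u Hu. destruct (Rlt_or_le 0 u) as [h|h].
    - pose proof (cosh_gt1 u h). lra.
    - assert (u = 0) by lra. subst u. rewrite cosh_0.
      destruct (Req_dec c 1) as [e|e].
      + exfalso. apply hxy. split.
        * assert (s = 0) by lra. unfold s in H. destruct (Req_dec x 0); auto.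
          pose proof (Rabs_no_R0 x H0). contradiction.
        * apply cos1. exact e.
      + lra. }
  set (g := fun v => alpha*s*sinh v/(2*(cosh v - c)) - /2*ln(2*(cosh v - c))).
  assert (key : forall t, Wt alpha t x y - t/2 = g (s+t) + (1-alpha)/2*s).
  { intro t. unfold Wt, g. fold s c. ring. }
  assert (P1 : forall t1 t2 : R, 0 <= t1 -> t1 <= t2 ->
      Wt alpha t2 x y - t2 / 2 <= Wt alpha t1 x y - t1 / 2).
  { intros t1 t2 h1 h2. rewrite !key.
    destruct (Req_dec t1 t2) as [->|hn]. lra.
    destruct (MVT_cor2 g (fun u => /2*(alpha*s*(1 - c*cosh u) - sinh u*(cosh u - c))/(cosh u - c)^2)
       (s+t1) (s+t2)) as [z [Hz Hz2]].
    lra. intros z Hz. apply der_g. apply pos. lra.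
    assert (/2*(alpha*s*(1 - c*cosh z) - sinh z*(cosh z - c))/(cosh z - c)^2 <= 0).
    { apply dg_nonpos; try lra. apply pos. lra. }
    nra. }
  assert (P2 : Wt alpha 0 x y - 0 / 2 = W alpha x y).
  { unfold Wt, W. rewrite Rplus_0_r.
    assert (D : 0 < cosh (Rabs x) - cos y) by (apply pos; unfold s; lra).
    assert (E : Rabs x * sinh (Rabs x) = x * sinh x /\ cosh (Rabs x) = cosh x).
    { destruct (Rcase_abs x) as [h|h].
      - rewrite Rabs_left by lra. rewrite sinh_opp, cosh_opp. split; ring.
      - rewrite Rabs_pos_eq by lra. split; ring. }
    destruct E as [E1 E2]. rewrite E2 in *.
    replace (alpha * Rabs x * sinh (Rabs x)) with (alpha * (x * sinh x)) by (rewrite <- E1; ring).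
    field. lra. }
  split; [exact P1|split; [exact P2|]].
  intros t ht. rewrite <- P2. pose proof (P1 0 t (Rle_refl 0) ht). lra.
Qed.
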